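(* Let $\varepsilon>0$ and let $s:\Delta_{L-1}\to2^{[L]}$ be a selection rule that is $\varepsilon$-compatible, permutation invariant, and contains the argmax. Then for every $w\in\Delta_{L-1}$ and $j\in[L]$, if $s(w)=\{j\}$ then $\mathrm{argmax}^\varepsilon(w)=\{j\}$.
   Context: $\Delta_{L-1}=\{w\in\mathbb{R}^L:w_i\ge0,\sum_iw_i=1\}$, $\|\cdot\|$ Euclidean norm. $s$ is $\varepsilon$-compatible if $\|v-w\|<\varepsilon$ implies $s(v)\cap s(w)\ne\varnothing$ for all $v,w\in\Delta_{L-1}$. $s$ is permutation invariant if for all $w\in\Delta_{L-1}$ and permutations $\sigma$ of $[L]$, with $v=(w_{\sigma(1)},\dots,w_{\sigma(L)})$, $j\in s(v)\iff\sigma(j)\in s(w)$. $s$ contains the argmax if $\{j:w_j=\max_\ell w_\ell\}\subseteq s(w)$ for all $w$. For $j\in[L]$, $R_j^\varepsilon=\{w\in\mathbb{R}^L: w_j\ge\max_{\ell\neq j}w_\ell+\varepsilon/\sqrt2\}$, and $\mathrm{argmax}^\varepsilon(w)=\{j\in[L]:\mathrm{dist}(w,R_j^\varepsilon)<\varepsilon\}$ with $\mathrm{dist}(w,R)=\inf_{u\in R}\|w-u\|$. *)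

(* Defs.v *)
From HB Require Import structures.
From mathcomp Require Import all_boot all_order all_algebra all_fingroup.
From mathcomp Require Import boolp classical_sets reals.
Set Implicit Arguments. Unset Strict Implicit. Unset Printing Implicit Defensive.
Import Order.TTheory GRing.Theory Num.Theory.
Local Open Scope ring_scope.
Local Open Scope classical_set_scope.

(* Points of R^L are functions 'I_L -> R ; [L] is represented by 'I_L. *)

Definition enorm {R : realType} {L : nat} (v : 'I_L -> R) : R :=
  Num.sqrt (\sum_(i < L) v i ^+ 2).

Definition simplex {R : realType} {L : nat} (w : 'I_L -> R) : Prop :=
  (forall i, 0 <= w i) /\ \sum_(i < L) w i = 1.

Definition eps_compatible {R : realType} {L : nat} (eps : R)
  (s : ('I_L -> R) -> {set 'I_L}) : Prop :=
  forall v w, simplex v -> simplex w ->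
    enorm (fun i => v i - w i) < eps -> (s v :&: s w != finset.set0).

Definition perm_invariant {R : realType} {L : nat}
  (s : ('I_L -> R) -> {set 'I_L}) : Prop :=
  forall (w : 'I_L -> R) (sigma : {perm 'I_L}), simplex w ->
    forall j, (j \in s (fun i => w (sigma i))) = (sigma j \in s w).

Definition contains_argmax {R : realType} {L : nat}
  (s : ('I_L -> R) -> {set 'I_L}) : Prop :=
  forall w, simplex w ->
    forall j, (forall l, w l <= w j) -> j \in s w.

Definition Rregion {R : realType} {L : nat} (eps : R) (j : 'I_L) : set ('I_L -> R) :=
  [set w | forall l, l != j -> w l + eps / Num.sqrt 2 <= w j].

Definition dist {R : realType} {L : nat} (w : 'I_L -> R) (A : set ('I_L -> R)) : R :=
  inf [set enorm (fun i => w i - u i) | u in A].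

Definition argmax_eps {R : realType} {L : nat} (eps : R) (w : 'I_L -> R) : {set 'I_L} :=
  [set j | `[< dist w (Rregion eps j) < eps >]].

(* Main.v *)
Require Import Defs.
From HB Require Import structures.
From mathcomp Require Import all_boot all_order all_algebra all_fingroup.
From mathcomp Require Import reals.
From mathcomp Require Import boolp classical_sets.
From mathcomp Require Import ring lra.
Import Order.TTheory GRing.Theory Num.Theory.
Local Open Scope ring_scope.

Section H.
Variable R : realType.

Lemma sum2_ge (L : nat) (x : 'I_L -> R) (j k : 'I_L) : k != j ->
  x j ^+ 2 + x k ^+ 2 <= \sum_(i < L) x i ^+ 2.
Proof.
move=> kj; rewrite (bigD1 j) //= (bigD1 k) /=; last by rewrite kj.
rewrite addrA lerDl; apply: sumr_ge0 => i _; exact: sqr_ge0.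
Qed.

Lemma sqrt_lt (a e : R) : 0 < e -> (Num.sqrt a < e) = (a < e ^+ 2).
Proof.
move=> e0; rewrite -(ltr_sqrt a (exprn_gt0 2 e0)) sqrtr_sqr gtr0_norm //.
Qed.

Lemma sqrt_ge (a e : R) : 0 < e -> (e <= Num.sqrt a) = (e ^+ 2 <= a).
Proof. by move=> e0; rewrite !leNgt sqrt_lt. Qed.

End H.

Theorem proposition4 (R : realType) (L : nat) (eps : R)
  (s : ('I_L -> R) -> {set 'I_L}) :
  0 < eps -> eps_compatible eps s -> perm_invariant s -> contains_argmax s ->
  forall (w : 'I_L -> R) (j : 'I_L), simplex w ->
    s w = [set j] -> argmax_eps eps w = [set j].
Proof.
move=> e0 hcomp hperm hargmax w j hw hsw.
have s20 : 0 < Num.sqrt (2:R) by rewrite sqrtr_gt0.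
have s2 : Num.sqrt (2:R) ^+ 2 = 2 by rewrite sqr_sqrtr.
set c := eps / Num.sqrt 2.
have hc2 : c ^+ 2 * 2 = eps ^+ 2.
  rewrite /c exprMn exprVn s2; field.
  all: try by [] ; try by rewrite gt_eqF.
have c0 : 0 < c by rewrite /c divr_gt0.
have hcdef : eps / Num.sqrt 2 = c by [].
clearbody c.
have ceps : c < eps.
  rewrite ltNge; apply/negP => h.
  have h2 : eps * eps <= c * c by apply: ler_pM; lra.
  move: hc2; rewrite !expr2; nra.
have hmax : forall l, w l <= w j.
  case: (@Order.TotalTheory.arg_maxP _ _ 'I_L j xpredT w erefl) => m _ Hm.
  have : m \in s w by apply: hargmax => // l; exact: Hm.
  by rewrite hsw inE => /eqP mj l; rewrite -mj; apply: Hm.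
have hgap : forall k, k != j -> c <= w j - w k.
  move=> k kj; rewrite leNgt; apply/negP => hlt.
  set v := fun i => w (tperm j k i).
  have hv : simplex v.
    split; first by move=> i; case: hw => h _; apply: h.
    case: hw => _ <-; rewrite /v.
    by rewrite [RHS](reindex_inj (@perm_inj _ (tperm j k))).
  have hsv : s v = [set k].
    apply/setP => i; rewrite (hperm w (tperm j k) hw i) hsw !inE.
    by rewrite (canF_eq (tpermK j k)) tpermL.
  have hn : enorm (fun i => v i - w i) < eps.
    rewrite /enorm sqrt_lt // (bigD1 j) //= (bigD1 k) /=; last by rewrite kj.
    rewrite big1 ?addr0; last first.
      move=> i /andP [ik ij]; rewrite /v tpermD 1?eq_sym // subrr expr0n //.
    rewrite /v tpermL tpermR.
    have := hmax k; nra.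
  move: (hcomp v w hv hw hn); rewrite hsv hsw.
  apply/negP; rewrite negbK; apply/eqP/setP => i; rewrite !inE.
  by case: eqP => // ->; rewrite (negbTE kj).
have lb0 : forall A, has_lbound [set enorm (fun i => w i - u i) | u in A].
  by move=> A; exists 0 => y [u _ <-]; apply: sqrtr_ge0.
apply/setP => k; rewrite !inE.
have [->|kj] := eqVneq k j.
  apply/asboolP; rewrite /dist.
  apply: (le_lt_trans _ ceps).
  apply: (ge_inf (lb0 _)).
  exists (fun i => w i + (if i == j then c else 0)).
    move=> l lj /=; rewrite eqxx (negbTE lj) addr0; rewrite hcdef; have := hmax l; lra.
    idtac.
  rewrite /enorm (bigD1 j) //= big1 ?addr0; last first.
    by move=> i ij; rewrite (negbTE ij) addr0 subrr expr0n.
  by rewrite eqxx opprD addNKr sqrrN sqrtr_sqr gtr0_norm.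
apply/negbTE/asboolPn/negP; rewrite -leNgt /dist.
apply: lb_le_inf.
  exists (enorm (fun i => w i - (if i == k then c else 0))).
  exists (fun i => if i == k then c else 0) => //.
  by move=> l lk /=; rewrite eqxx (negbTE lk) add0r hcdef.
move=> y [u hu <-].
rewrite /enorm sqrt_ge //.
have jk : j != k by rewrite eq_sym.
have H := @sum2_ge R L (fun i => w i - u i) j k kj; rewrite /= in H.
have := hu j jk; rewrite hcdef => h1; have h2 := hgap k kj.
have h3 : 0 <= (w j - u j - (u k - w k)) ^+ 2 by apply: sqr_ge0.
have h4 : 0 <= ((w j - u j) + (u k - w k) - 2 * c) * ((w j - u j) + (u k - w k) + 2 * c) by apply: mulr_ge0; lra.
move: H hc2 h3 h4; rewrite !expr2; nra.
Qed.
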